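(* Exact provisioning of each of the following queries requires sketches of size $\min(2^{\Omega(k)},\Omega(n))$ bits: (i) the boolean conjunctive query with negation $Q_{\mathrm{NOTSUB}}:\ \mathit{ans}()\,{:\!-}\,A(x),\neg B(x)$ over a schema with unary relations $A,B$ (true on $I$ iff some $x$ has $A(x)\in I$ and $B(x)\notin I$); (ii) the recursive Datalog (negation-free) st-connectivity query over a binary edge relation $E$ with constants $\mathtt{s},\mathtt{t}$: $\mathit{ans}()\,{:\!-}\,T(\mathtt{t})$; $T(y)\,{:\!-}\,E(x,y),T(x)$; $T(\mathtt{s})$.
   Context: A hypothetical $h$ maps each instance $I$ to a sub-instance $h(I)\subseteq I$; for hypotheticals $h_1,\dots,h_k$ and nonempty scenario $S\subseteq[k]$, $I[S]=\bigcup_{i\in S}h_i(I)$; $n=|I|$. A provisioning scheme for $Q$: a (possibly randomized) compression algorithm mapping $(I,h_1,\dots,h_k)$ to a sketch $\Gamma$, and an extraction algorithm that, for any scenario $S$ and using only $\Gamma$, outputs $Q(I[S])$ (correct with probability at least $0.99$ per scenario). ''Requires sketches of size $\min(2^{\Omega(k)},\Omega(n))$'' means: there is $c>0$ such that every such scheme produces, on some instance with at most $n$ tuples and $k$ hypotheticals, a sketch of at least $c\min(2^{ck},n)$ bits. *)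

(* Defs.v *)
From Stdlib Require Import Reals ClassicalEpsilon.
From HB Require Import structures.
From mathcomp Require Import all_boot.

Set Implicit Arguments.
Unset Strict Implicit.
Unset Printing Implicit Defensive.

Definition holds (P : Prop) : bool :=
  if excluded_middle_informative P then true else false.

Section Provisioning.
Variable T : eqType.

(* An instance is a finite set of tuples, represented by a sequence
   (set semantics); its size is the number of distinct tuples. *)
Definition inst_size (I : seq T) : nat := size (undup I).

Definition is_hyp (h : seq T -> seq T) : Prop :=
  forall J : seq T, {subset h J <= J}.

Definition scen_inst (k : nat) (hs : 'I_k -> seq T -> seq T) (I : seq T)
  (S : {set 'I_k}) : seq T :=
  flatten [seq hs i I | i <- enum S].

(* Finitely supported distributions over sketches (bit strings). *)
Definition weight_sum (d : seq (R * seq bool)) : R :=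
  List.fold_right (fun p acc => Rplus p.1 acc) R0 d.

Definition is_dist (d : seq (R * seq bool)) : Prop :=
  (forall p, List.In p d -> Rle R0 p.1) /\ weight_sum d = R1.

Definition prob (d : seq (R * seq bool)) (E : seq bool -> bool) : R :=
  List.fold_right (fun p acc => Rplus (if E p.2 then p.1 else R0) acc) R0 d.

(* A (randomized) provisioning scheme for k hypotheticals: the compression
   algorithm maps (I, h_1..h_k) to a distribution over sketches; the
   (deterministic) extraction maps a sketch and a scenario to an answer. *)
Record scheme (k : nat) := Scheme {
  compress : seq T -> ('I_k -> seq T -> seq T) -> seq (R * seq bool);
  extract : seq bool -> {set 'I_k} -> bool
}.

Definition provisions (Q : seq T -> Prop) (k : nat) (P : scheme k) : Prop :=
  forall (I : seq T) (hs : 'I_k -> seq T -> seq T),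
    (forall i, is_hyp (hs i)) ->
    is_dist (compress P I hs) /\
    forall S : {set 'I_k}, S != set0 ->
      Rle (Rdiv (IZR 99) (IZR 100))
        (prob (compress P I hs)
           (fun G => extract P G S == holds (Q (scen_inst hs I S)))).

Definition requires_large_sketches (Q : seq T -> Prop) : Prop :=
  exists c : R, Rlt R0 c /\
  forall (k n : nat), 0 < k ->
  forall P : scheme k, provisions Q P ->
  exists (I : seq T) (hs : 'I_k -> seq T -> seq T),
    (forall i, is_hyp (hs i)) /\ inst_size I <= n /\
    exists (w : R) (G : seq bool),
      List.In (w, G) (compress P I hs) /\ Rlt R0 w /\
      Rle (Rmult c (Rmin (Rpower (INR 2) (Rmult c (INR k))) (INR n)))
          (INR (size G)).

End Provisioning.

Inductive factAB := FA of nat | FB of nat.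
Definition fAB2p (a : factAB) : bool * nat :=
  match a with FA x => (true, x) | FB x => (false, x) end.
Definition p2fAB (p : bool * nat) : factAB := if p.1 then FA p.2 else FB p.2.
Lemma fAB2pK : cancel fAB2p p2fAB. Proof. by case. Qed.
HB.instance Definition _ := Equality.copy factAB (can_type fAB2pK).

Definition Q_notsub (I : seq factAB) : Prop :=
  exists x : nat, FA x \in I /\ FB x \notin I.

(* Schema (ii): binary edge relation E over domain nat; tuples are pairs.
   Datalog: T(s).  T(y) :- E(x,y), T(x).  ans() :- T(t).
   T is the least fixpoint, given inductively. *)
Inductive derT (I : seq (nat * nat)) (s : nat) : nat -> Prop :=
| derT_base : derT I s s
| derT_step : forall x y, derT I s x -> (x, y) \in I -> derT I s y.

Definition Q_stconn (s t : nat) (I : seq (nat * nat)) : Prop := derT I s t.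

(* Main.v *)
Require Import Defs.
From Stdlib Require Import Reals.
From HB Require Import structures.
From mathcomp Require Import all_boot.
From Stdlib Require Import Reals Lra Lia.
From mathcomp Require Import all_boot.
Set Implicit Arguments. Unset Strict Implicit. Unset Printing Implicit Defensive.
From mathcomp Require Import zify.
Lemma prod_if2 (I : eqType) (s : seq I) (P : pred I) :
  \prod_(j <- s) (if P j then 2 else 1) = 2 ^ count P s.
Proof.
elim: s => [|a s IH]; first by rewrite big_nil.
by rewrite big_cons IH /=; case: (P a); rewrite ?expnS ?mul1n.
Qed.

Definition agree m (x y : {ffun 'I_m -> bool}) :=
  count (fun j => x j == y j) (enum 'I_m).

Lemma ball_sum m (y : {ffun 'I_m -> bool}) :
  \sum_(x : {ffun 'I_m -> bool}) 2 ^ agree x y = 3 ^ m.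
Proof.
transitivity (\sum_(x : {ffun 'I_m -> bool}) \prod_(j : 'I_m)
   (fun j b => if b == y j then 2 else 1) j (x j)).
  apply: eq_bigr => x _; rewrite /agree -prod_if2 enumT.
  by rewrite /index_enum; apply: eq_bigr.
rewrite -(bigA_distr_bigA (fun j (b : bool) => if b == y j then 2 else 1)).
transitivity (\prod_(j < m) 3).
  by apply: eq_bigr => j _; rewrite big_bool /=; case: (y j).
by rewrite prod_nat_const card_ord.
Qed.

Lemma ball_card m (y : {ffun 'I_m -> bool}) d :
  (\sum_(x : {ffun 'I_m -> bool}) (m <= agree x y + d)) * 2 ^ (m - d) <= 3 ^ m.
Proof.
rewrite -(ball_sum y) big_distrl /=; apply: leq_sum => x _.
case: (leqP m (agree x y + d)) => H; last by rewrite mul0n.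
by rewrite mul1n leq_pexp2l //; lia.
Qed.

Fixpoint allseqs (L : nat) : seq (seq bool) :=
  match L with
  | 0 => [:: [::]]
  | L'.+1 => [::] :: [seq b :: G | b <- [:: true; false], G <- allseqs L']
  end.

Lemma size_allseqs L : (size (allseqs L)).+1 = 2 ^ L.+1.
Proof.
elim: L => [//|L IH].
rewrite -[LHS]/((size [seq b :: G | b <- [:: true; false], G <- allseqs L]).+2).
rewrite size_allpairs expnS -IH /=; lia.
Qed.

Lemma mem_allseqs L G : size G <= L -> G \in allseqs L.
Proof.
elim: L G => [|L IH] [|b G] //= H.
rewrite in_cons; apply/orP; right.
have HG : G \in allseqs L by apply: IH.
by case: b; rewrite ?mem_cat (map_f _ HG) ?orbT.
Qed.

Lemma cover_bound m d (Y : seq {ffun 'I_m -> bool}) :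
  (forall x, exists y, y \in Y /\ m <= agree x y + d) ->
  2 ^ m * 2 ^ (m - d) <= size Y * 3 ^ m.
Proof.
move=> Hc.
have E1 : 2 ^ m = \sum_(x : {ffun 'I_m -> bool}) 1.
  by rewrite sum1_card card_ffun card_bool card_ord.
have E2 : \sum_(x : {ffun 'I_m -> bool}) 1 <=
   \sum_(x : {ffun 'I_m -> bool}) \sum_(y <- Y) (m <= agree x y + d).
  apply: leq_sum => x _; have [y [yY Hy]] := Hc x.
  by rewrite (big_rem y yY) /= Hy.
rewrite E1; apply: leq_trans (leq_mul E2 (leqnn _)) _.
rewrite exchange_big big_distrl /=.
apply: leq_trans (_ : \sum_(y <- Y) 3 ^ m <= _).
  by apply: leq_sum => y _; apply: ball_card.
by rewrite big_const_seq count_predT iter_addn_0 mulnC.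
Qed.

Lemma leq_expb a b e : a <= b -> a ^ e <= b ^ e.
Proof. by case: e => [//|e] H; rewrite leq_exp2r. Qed.

Lemma key_arith a m : a <= (m %/ 5).*2 -> 2 ^ a * 3 ^ m <= 4 ^ m.
Proof.
move=> Ha; have Em := divn_eq m 5.
have He : m %% 5 <= 5 by rewrite ltnW // ltn_mod.
move: Ha Em He; set r := m %/ 5; set e := m %% 5; clearbody r e => Ha -> He.
rewrite !expnD !(mulnC r) !expnM.
have h1 : 2 ^ a <= 4 ^ r.
  have -> : 4 ^ r = 2 ^ (r.*2) by rewrite -mul2n expnM.
  exact: leq_pexp2l.
have h2 : 4 ^ r * (3 ^ 5) ^ r <= (4 ^ 5) ^ r by rewrite -expnMn leq_expb.
have h3 : 3 ^ e <= 4 ^ e by exact: leq_expb.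
rewrite mulnA; apply: leq_mul h3.
by apply: leq_trans h2; rewrite leq_mul2r h1 orbT.
Qed.

Lemma final_arith m L d sY : 0 < m -> 16 * L < m -> 100 * d <= m ->
  sY.+1 <= 2 ^ L.+1 -> 2 ^ m * 2 ^ (m - d) <= sY * 3 ^ m -> False.
Proof.
move=> m0 HL Hd HY H.
have E : 4 ^ m <= sY * 3 ^ m * 2 ^ d.
  have -> : 4 ^ m = 2 ^ m * 2 ^ (m - d) * 2 ^ d.
    by rewrite -!expnD -(expnM 2 2) mul2n -addnn; congr (_ ^ _); lia.
  by rewrite leq_mul2r H orbT.
case: L HL HY => [|L] HL HY.
  have sY1 : sY <= 1 by lia.
  have : 3 ^ m * 2 ^ d < 4 ^ m.
    case: (ltnP m 100) => Hm.
      have -> : d = 0 by lia.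
      by rewrite muln1 ltn_exp2r.
    have K : 2 ^ d.+1 * 3 ^ m <= 4 ^ m by apply: key_arith; lia.
    move: K; rewrite expnS.
    have : 0 < 3 ^ m * 2 ^ d by rewrite muln_gt0 !expn_gt0.
    move: (3 ^ m) (2 ^ d) (4 ^ m) => X Y Z; nia.
  have : sY * 3 ^ m * 2 ^ d <= 3 ^ m * 2 ^ d.
    by rewrite -mulnA; apply: leq_trans (leq_mul sY1 (leqnn _)) _; rewrite mul1n.
  lia.
have K := key_arith (a := L.+2 + d) (m := m).
have : 2 ^ (L.+2 + d) * 3 ^ m <= 4 ^ m by apply: K; lia.
rewrite expnD.
have : sY * 3 ^ m * 2 ^ d < 2 ^ L.+2 * 3 ^ m * 2 ^ d.
  by rewrite ltn_mul2r expn_gt0 /= ltn_mul2r expn_gt0 /=.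
move: E; move: (3 ^ m) (2 ^ d) (4 ^ m) (2 ^ L.+2) => X Y Z W; nia.
Qed.

Section Avg.
Local Open Scope R_scope.

Definition sumj (d : seq (R * seq bool)) I (E : I -> seq bool -> bool) (s : seq I) : R :=
  List.fold_right Rplus R0 (map (fun j => prob d (E j)) s).

Lemma sumj_cons p d I (E : I -> seq bool -> bool) s :
  sumj (p :: d) E s = p.1 * INR (count (fun j => E j p.2) s) + sumj d E s.
Proof.
elim: s => [|j s IH]; rewrite /sumj /= ?Rmult_0_r ?Rplus_0_l //.
rewrite /sumj /= in IH; rewrite IH plus_INR.
case: (E j p.2); [change (INR true) with 1 | change (INR false) with 0]; ring.
Qed.

Lemma sumj_nil I (E : I -> seq bool -> bool) s : sumj [::] E s = 0.
Proof. by elim: s => [|j s IH] //=; rewrite /sumj /= in IH *; rewrite IH; ring. Qed.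

Lemma sumj_lb d I (E : I -> seq bool -> bool) s :
  (forall j, 99/100 <= prob d (E j)) -> INR (size s) * (99/100) <= sumj d E s.
Proof.
move=> H; elim: s => [|j s IH]; first by rewrite /sumj /= Rmult_0_l; lra.
rewrite /sumj [List.fold_right _ _ _]/= [size _]/= S_INR.
rewrite /sumj in IH.
have := H j; lra.
Qed.

Lemma sumj_ub d I (E : I -> seq bool -> bool) s :
  (forall p, List.In p d -> 0 <= p.1) ->
  (forall p, List.In p d -> 0 < p.1 -> (100 * count (fun j => E j p.2) s < 99 * size s)%N) ->
  100 * sumj d E s <= INR (99 * size s) * weight_sum d - weight_sum d.
Proof.
elim: d => [|p d IH] Hpos Hc.
  rewrite sumj_nil /=; lra.
rewrite sumj_cons /=.
have IH' := IH (fun q Hq => Hpos q (or_intror Hq)) (fun q Hq => Hc q (or_intror Hq)).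
have Hp := Hpos p (or_introl erefl).
have : 100 * (p.1 * INR (count (fun j => E j p.2) s)) <= (INR (99 * size s) - 1) * p.1.
  case: (Rle_lt_or_eq_dec _ _ Hp) => Hp'.
    have Hn := Hc p (or_introl erefl) Hp'.
    have : 100 * INR (count (fun j => E j p.2) s) + 1 <= INR (99 * size s).
      have := le_INR _ _ (elimT leP Hn).
      by rewrite S_INR mult_INR /=; lra.
    nra.
  rewrite -Hp'; lra.
lra.
Qed.

Lemma averaging d m (E : 'I_m -> seq bool -> bool) :
  is_dist d -> (forall j, 99/100 <= prob d (E j)) ->
  exists w G, List.In (w, G) d /\ 0 < w /\
    (99 * m <= 100 * count (fun j => E j G) (enum 'I_m))%N.
Proof.
move=> [Hpos Hw] Hj.
apply: Classical_Prop.NNPP => Hno.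
have Hc : forall p, List.In p d -> 0 < p.1 ->
   (100 * count (fun j => E j p.2) (enum 'I_m) < 99 * size (enum 'I_m))%N.
  move=> [w G] HIn Hw0; rewrite size_enum_ord ltnNge; apply/negP => Hle.
  by apply: Hno; exists w, G.
have U := sumj_ub Hpos Hc.
have L := sumj_lb (enum 'I_m) Hj.
rewrite Hw size_enum_ord mult_INR in U *.
rewrite size_enum_ord in L.
have H99 : INR 99 = 99 by rewrite /= ; ring.
rewrite H99 in U. change R1 with 1 in U. move: L U; set S := sumj _ _ _; move: (INR m) => X. intros. lra.
Qed.
End Avg.

Lemma lower_bound (T : eqType) (Q : seq T -> Prop) k (P : scheme T k)
  (HP : provisions Q P) m (Inst : {ffun 'I_m -> bool} -> seq T)
  (Hs : 'I_k -> seq T -> seq T) (Sc : 'I_m -> {set 'I_k}) :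
  0 < m -> (forall i, is_hyp (Hs i)) -> (forall j, Sc j != set0) ->
  (forall x j, holds (Q (scen_inst Hs (Inst x) (Sc j))) = x j) ->
  exists x w G, List.In (w, G) (compress P (Inst x) Hs) /\ Rlt 0 w /\
    m <= 16 * size G.
Proof.
move=> m0 Hhyp HSc Hq.
apply: Classical_Prop.NNPP => Hno.
have Hsmall : forall x w G, List.In (w, G) (compress P (Inst x) Hs) ->
    Rlt 0 w -> 16 * size G < m.
  move=> x w G HI Hw; rewrite ltnNge; apply/negP => Hle.
  by apply: Hno; exists x, w, G.
pose L := (m - 1) %/ 16.
pose dec (G : seq bool) : {ffun 'I_m -> bool} := [ffun j => extract P G (Sc j)].
pose Y := [seq dec G | G <- allseqs L].
have Hcov : forall x, exists y, y \in Y /\ m <= agree x y + m %/ 100.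
  move=> x.
  have [Hd Hpr] := HP (Inst x) Hs Hhyp.
  have [w [G [HI [Hw Hc]]]] := averaging
      (E := fun j G => extract P G (Sc j) == holds (Q (scen_inst Hs (Inst x) (Sc j))))
      Hd (fun j => Hpr (Sc j) (HSc j)).
  have HG : size G <= L.
    have := Hsmall x w G HI Hw; rewrite /L; lia.
  exists (dec G); split; first by rewrite map_f // mem_allseqs.
  have -> : agree x (dec G) = count (fun j => extract P G (Sc j) ==
      holds (Q (scen_inst Hs (Inst x) (Sc j)))) (enum 'I_m).
    by apply: eq_count => j; rewrite ffunE Hq eq_sym.
  have Hcm : count (fun j => extract P G (Sc j) ==
      holds (Q (scen_inst Hs (Inst x) (Sc j)))) (enum 'I_m) <= m.
    by rewrite -[X in _ <= X](size_enum_ord m) count_size.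
  move: Hc Hcm; rewrite /=; set c := count _ _; clearbody c => Hc Hcm.
  have : m - c <= m %/ 100 by rewrite leq_divRL //; lia.
  lia.
have Hb := cover_bound Hcov.
have m1 := m0.
apply: (final_arith (L := L) (d := m %/ 100) (sY := size Y)) m0 _ _ _ Hb.
- rewrite /L; have := leq_divM (m - 1) 16; move: ((m - 1) %/ 16) => q; clear -m1; lia.
- have := leq_divM m 100; move: (m %/ 100) => q; clear -m1; lia.
- by rewrite size_map size_allseqs.
Qed.

Definition anc D j p := (2 ^ D + j) %/ 2 ^ (D - p).
Definition inT D j (i : nat) :=
  (i == D.*2) || ((i./2 < D) && (odd i == odd (anc D j (i./2).+1))).

Lemma anc_range D j p : p <= D -> j < 2 ^ D -> 2 ^ p <= anc D j p < 2 ^ p.+1.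
Proof.
move=> Hp Hj; rewrite /anc.
have E : 2 ^ D = 2 ^ p * 2 ^ (D - p) by rewrite -expnD subnKC.
rewrite leq_divRL ?expn_gt0 // ltn_divLR ?expn_gt0 //.
rewrite -E leq_addr /= -expnD addSn subnKC // expnS; lia.
Qed.

Lemma anc_step D j p : p < D -> anc D j p.+1 = odd (anc D j p.+1) + (anc D j p).*2.
Proof.
move=> Hp; rewrite /anc.
have -> : D - p = (D - p.+1).+1 by lia.
rewrite expnS mulnC divnMA.
by rewrite divn2 odd_double_half.
Qed.

Lemma anc_D D j : anc D j D = 2 ^ D + j.
Proof. by rewrite /anc subnn expn0 divn1. Qed.

Lemma anc_0 D j : j < 2 ^ D -> anc D j 0 = 1.
Proof.
move=> Hj; have := anc_range (p := 0) (leq0n D) Hj; rewrite expn0 expn1; lia.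
Qed.

Lemma anc_eq D j j' : j < 2 ^ D -> j' < 2 ^ D ->
  (forall p, p < D -> odd (anc D j p.+1) = odd (anc D j' p.+1)) -> j = j'.
Proof.
move=> Hj Hj' H.
have Hall : forall p, p <= D -> anc D j p = anc D j' p.
  elim=> [|p IH] Hp; first by rewrite !anc_0.
  by rewrite anc_step // [RHS]anc_step // IH ?H // ltnW.
have := Hall D (leqnn D); rewrite !anc_D; lia.
Qed.

Lemma antichain D j j' : j < 2 ^ D -> j' < 2 ^ D -> j != j' ->
  exists i, i < D.*2 /\ inT D j i /\ ~~ inT D j' i.
Proof.
move=> Hj Hj' Hne.
have [p [Hp Hodd]] : exists p, p < D /\ odd (anc D j p.+1) != odd (anc D j' p.+1).
  apply: Classical_Prop.NNPP => Hn; move/eqP: Hne; apply; apply: (anc_eq Hj Hj') => p Hp.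
  apply/eqP; apply: Classical_Prop.NNPP => Hq; apply: Hn; exists p; split=> //.
  exact/negP.
exists (odd (anc D j p.+1) + p.*2); split.
  by rewrite -!muln2; case: (odd _) => /=; lia.
rewrite /inT half_bit_double oddD odd_double addbF oddb Hp eqxx /=.
have Hne2 : (odd (anc D j p.+1) + p.*2 == D.*2) = false.
  by apply/negbTE; rewrite -!muln2; case: (odd _) => /=; lia.
rewrite Hne2 /=; split=> //.
Qed.

Lemma exp_uniq p q a : 2 ^ p <= a < 2 ^ p.+1 -> 2 ^ q <= a < 2 ^ q.+1 -> p = q.
Proof.
move=> /andP[H1 H2] /andP[H3 H4].
have : 2 ^ p < 2 ^ q.+1 by lia.
have : 2 ^ q < 2 ^ p.+1 by lia.
rewrite !ltn_exp2l //; lia.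
Qed.

Lemma mem_scen (T : eqType) k (hs : 'I_k -> seq T -> seq T) I (S : {set 'I_k}) f :
  reflect (exists2 i, i \in S & f \in hs i I) (f \in scen_inst hs I S).
Proof.
apply: (iffP flatten_mapP) => [[i Hi Hf]|[i Hi Hf]]; exists i => //.
- by rewrite mem_enum in Hi.
- by rewrite mem_enum.
Qed.

Lemma holdsT (P : Prop) : P -> holds P = true.
Proof. by rewrite /holds; case: ClassicalEpsilon.excluded_middle_informative. Qed.
Lemma holdsF (P : Prop) : ~ P -> holds P = false.
Proof. by rewrite /holds; case: ClassicalEpsilon.excluded_middle_informative. Qed.

Definition Scn D k (j : 'I_(2 ^ D)) : {set 'I_k} := [set i : 'I_k | inT D j i].
Arguments Scn : clear implicits.

Lemma Scn_nonempty D k (HD : D.*2 < k) j : Scn D k j != set0.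
Proof. by apply/set0Pn; exists (Ordinal HD); rewrite inE /inT eqxx. Qed.

Definition nsInst D (x : {ffun 'I_(2 ^ D) -> bool}) : seq factAB :=
  [seq FA (val j) | j <- enum 'I_(2 ^ D) & x j] ++
  (if 0 < D then [seq FB (val j) | j <- enum 'I_(2 ^ D)] else [::]).
Arguments nsInst : clear implicits.

Definition nsHs D k (i : 'I_k) (J : seq factAB) : seq factAB :=
  [seq f <- J | match f with FA _ => true | FB j' => ~~ inT D j' i end].

Lemma ns_spec D k (HD : D.*2 < k) x j :
  holds (Q_notsub (scen_inst (@nsHs D k) (nsInst D x) (Scn D k j))) = x j.
Proof.
case Hx: (x j).
- apply: holdsT; exists (val j); split.
  + apply/mem_scen; exists (Ordinal HD); first by rewrite inE /inT eqxx.
    rewrite mem_filter /= mem_cat; apply/orP; left.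
    by apply/mapP; exists j => //; rewrite mem_filter Hx mem_enum.
  + apply/negP => /mem_scen [i Hi]; rewrite mem_filter /= => /andP [Hn _].
    by rewrite inE in Hi; rewrite Hi in Hn.
- apply: holdsF => [[y [HA HB]]].
  move/mem_scen: HA => [i0 _]; rewrite mem_filter /= mem_cat => /orP [].
  + move/mapP => [j'' Hj'' [Ey]]; rewrite mem_filter in Hj''.
    case/andP: Hj'' => Hxj'' _.
    have Hne : val j != val j''.
      by apply/negP => /eqP /val_inj Ejj; rewrite Ejj Hxj'' in Hx.
    have HD0 : 0 < D.
      rewrite lt0n; apply/negP => /eqP D0.
      have h1 : val j < 2 ^ D := ltn_ord j.
      have h2 : val j'' < 2 ^ D := ltn_ord j''.
      move: Hne h1 h2; move: (val j) (val j'') => a b.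
      rewrite D0 expn0; lia.
    have [i [Hi [Hin Hnot]]] := antichain (ltn_ord j) (ltn_ord j'') Hne.
    have Hik : i < k by apply: ltn_trans Hi HD.
    move/negP: HB; apply; apply/mem_scen; exists (Ordinal Hik); first by rewrite inE.
    rewrite mem_filter /= Ey Hnot /= mem_cat HD0; apply/orP; right.
    by apply/mapP; exists j'' => //; rewrite mem_enum.
  + by case: (0 < D) => //; move/mapP => [? ?].
Qed.

Lemma ns_size D (x : {ffun 'I_(2 ^ D) -> bool}) :
  inst_size (nsInst D x) <= (if D == 0 then 1 else 2 ^ D.+2).
Proof.
rewrite /inst_size; apply: leq_trans (size_undup _) _.
rewrite /nsInst size_cat size_map.
have H1 : size [seq j <- enum 'I_(2 ^ D) | x j] <= 2 ^ D.
  by rewrite size_filter; apply: leq_trans (count_size _ _) _; rewrite size_enum_ord.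
case: D x H1 => [|D] x H1 /=; first by rewrite addn0.
rewrite size_map size_enum_ord; move: H1; move: (size [seq j <- _ | _]) => a.
rewrite !expnS; lia.
Qed.

Lemma ns_hyp D k i : is_hyp (@nsHs D k i).
Proof. by move=> J f; rewrite mem_filter => /andP []. Qed.

Section ST.
Variables (s t : nat).
Hypothesis st : s <> t.

Definition gn a := if a == 1 then s else s + t + 1 + a.

Lemma gn_t a : gn a <> t.
Proof. by rewrite /gn; case: (a == 1) => //; lia. Qed.

Lemma gn_inj a b : 0 < a -> 0 < b -> gn a = gn b -> a = b.
Proof.
rewrite /gn; case: eqP => [->|Ha]; case: eqP => [->|Hb] //; lia.
Qed.

Definition tree D := [seq (gn a, gn (nat_of_bool b + a.*2)) | a <- iota 1 (2 ^ D - 1), b : bool <- [:: false; true]].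

Definition stInst D (x : {ffun 'I_(2 ^ D) -> bool}) : seq (nat * nat) :=
  tree D ++ [seq (gn (2 ^ D + val j), t) | j <- enum 'I_(2 ^ D) & x j].
Arguments stInst : clear implicits.

Definition Elab D (i : nat) : seq (nat * nat) :=
  if i == D.*2 then [seq (gn (2 ^ D + j), t) | j <- iota 0 (2 ^ D)]
  else [seq (gn a, gn (odd i + a.*2)) | a <- iota (2 ^ (i./2)) (2 ^ (i./2))].

Definition stHs D k (i : 'I_k) (J : seq (nat * nat)) : seq (nat * nat) :=
  [seq e <- J | e \in Elab D i].

Lemma st_hyp D k i : is_hyp (@stHs D k i).
Proof. by move=> J f; rewrite mem_filter => /andP []. Qed.

Lemma lab_inT D j p : p < D -> inT D j (odd (anc D j p.+1) + p.*2).
Proof.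
move=> Hp; rewrite /inT half_bit_double oddD odd_double addbF oddb Hp eqxx.
by rewrite orbT.
Qed.

Lemma lab_ne D (b : bool) p : p < D -> (b + p.*2 == D.*2) = false.
Proof. by move=> Hp; apply/negbTE; rewrite -!muln2; case: b => /=; lia. Qed.

Lemma st_reach D k (HD : D.*2 < k) x (j : 'I_(2 ^ D)) p : p <= D ->
  derT (scen_inst (@stHs D k) (stInst D x) (Scn D k j)) s (gn (anc D j p)).
Proof.
elim: p => [|p IH] Hp.
  by rewrite anc_0 // /gn eqxx; constructor.
apply: (derT_step (x := gn (anc D j p))); first by apply: IH; apply: ltnW.
have Hik : odd (anc D j p.+1) + p.*2 < k.
  by apply: leq_trans HD; rewrite -!muln2; case: (odd _) => /=; lia.
have Hr := anc_range (ltnW Hp) (ltn_ord j).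
have Hr1 := anc_range Hp (ltn_ord j).
have Hst := @anc_step D j p Hp.
apply/mem_scen; exists (Ordinal Hik); first by rewrite inE /= lab_inT.
rewrite mem_filter /Elab /= lab_ne // half_bit_double oddD odd_double addbF oddb.
apply/andP; split.
  apply/mapP; exists (anc D j p); first by rewrite mem_iota; move: Hr; rewrite expnS; lia.
  by rewrite -Hst.
rewrite mem_cat; apply/orP; left.
apply/allpairsP; exists (anc D j p, odd (anc D j p.+1)); split => /=.
- rewrite mem_iota; have : 2 ^ p.+1 <= 2 ^ D by rewrite leq_exp2l.
  have : 0 < 2 ^ p by rewrite expn_gt0.
  lia.
- by case: (odd _).
- by rewrite -Hst.
Qed.

Lemma st_inv D k x (j : 'I_(2 ^ D)) y :
  derT (scen_inst (@stHs D k) (stInst D x) (Scn D k j)) s y ->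
  (exists2 p, p <= D & y = gn (anc D j p)) \/ (y = t /\ x j).
Proof.
elim=> [|u v _ IH Huv].
  by left; exists 0 => //; rewrite anc_0 // /gn eqxx.
move/mem_scen: Huv => [i Hi]; rewrite inE in Hi.
rewrite mem_filter /Elab => /andP [HE HI].
case: eqP HE => [Ei|Ni] HE.
- move/mapP: HE => [j' _ [Eu Ev]].
  move: HI; rewrite mem_cat => /orP [].
    move/allpairsP => [[a b] [_ _ /= [_ Ev']]].
    by exfalso; apply: (gn_t (a := b + a.*2)); rewrite -Ev' Ev.
  move/mapP => [j'' Hj'' [Eu' _]]; rewrite mem_filter in Hj''.
  case/andP: Hj'' => Hxj'' _.
  case: IH => [[p Hp Eup]|[Eut _]]; last first.
    by exfalso; apply: (gn_t (a := 2 ^ D + val j'')); rewrite -Eu' Eut.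
  have Hr := anc_range Hp (ltn_ord j).
  have Ea : anc D j p = 2 ^ D + val j''.
    apply: gn_inj; last by rewrite -Eup Eu'.
      by move: Hr; have := expn_gt0 2 p; lia.
    by rewrite addn_gt0 expn_gt0.
  have Hj2 : val j'' < 2 ^ D := ltn_ord j''.
  have EpD : p = D.
    apply: (@exp_uniq _ _ (anc D j p)) => //.
    by rewrite Ea expnS; move: Hj2; lia.
  move: Ea; rewrite EpD anc_D => /eqP; rewrite eqn_add2l => /eqP /val_inj Ejj.
  by right; split => //; rewrite Ejj.
- move/mapP: HE => [a Ha [Eu Ev]].
  move: Hi; rewrite /inT; move/eqP/negbTE: Ni => -> /= /andP [Hi2 /eqP Hodd].
  rewrite mem_iota in Ha.
  have Ha2 : 2 ^ i./2 <= a < 2 ^ (i./2).+1.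
    by move: Ha; rewrite expnS; lia.
  case: IH => [[p Hp Eup]|[Eut _]]; last first.
    by exfalso; apply: (gn_t (a := a)); rewrite -Eu Eut.
  have Hr := anc_range Hp (ltn_ord j).
  have Ea : anc D j p = a.
    apply: gn_inj; last by rewrite -Eup Eu.
      by move: Hr; have := expn_gt0 2 p; lia.
    by move: Ha2; have := expn_gt0 2 (i./2); lia.
  have Epi : p = i./2.
    by apply: (@exp_uniq p (i./2) a) => //; rewrite -Ea.
  left; exists p.+1; first by rewrite Epi.
  by rewrite Ev Hodd -Ea -Epi -anc_step // Epi.
Qed.

Lemma st_spec D k (HD : D.*2 < k) x (j : 'I_(2 ^ D)) :
  holds (Q_stconn s t (scen_inst (@stHs D k) (stInst D x) (Scn D k j))) = x j.
Proof.
case Hx: (x j).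
- apply: holdsT; apply: (derT_step (x := gn (2 ^ D + val j))).
    by rewrite -anc_D; apply: st_reach.
  apply/mem_scen; exists (Ordinal HD); first by rewrite inE /inT eqxx.
  rewrite mem_filter /Elab /= eqxx; apply/andP; split.
    by apply/mapP; exists (val j) => //; rewrite mem_iota /= add0n.
  rewrite mem_cat; apply/orP; right.
  by apply/mapP; exists j => //; rewrite mem_filter Hx mem_enum.
- apply: holdsF => H; case: (st_inv H) => [[p _ Ep]|[_ Hx']].
    exact: (gn_t (esym Ep)).
  by rewrite Hx in Hx'.
Qed.

Lemma st_size D (x : {ffun 'I_(2 ^ D) -> bool}) :
  inst_size (stInst D x) <= (if D == 0 then 1 else 2 ^ D.+2).
Proof.
rewrite /inst_size; apply: leq_trans (size_undup _) _.
rewrite /stInst size_cat size_map /tree size_allpairs size_iota.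
have H1 : size [seq j <- enum 'I_(2 ^ D) | x j] <= 2 ^ D.
  by rewrite size_filter; apply: leq_trans (count_size _ _) _; rewrite size_enum_ord.
move: H1; move: (size [seq j <- _ | _]) => a.
case: D x => [|D] x /=; first by rewrite expn0 subnn; lia.
rewrite !expnS; lia.
Qed.
End ST.

Fixpoint dsel (n K : nat) : nat :=
  match K with
  | 0 => 0
  | K'.+1 => if 2 ^ K'.+3 <= n then K'.+1 else dsel n K'
  end.

Lemma dsel_le n K : dsel n K <= K.
Proof. by elim: K => [|K IH] //=; case: ifP => // _; apply: leqW. Qed.

Lemma dsel_size n K : dsel n K = 0 \/ 2 ^ (dsel n K).+2 <= n.
Proof. by elim: K => [|K IH] /=; [left | case: ifP => H; [right|]]. Qed.

Lemma dsel_max n K : dsel n K = K \/ n < 2 ^ (dsel n K).+3.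
Proof.
elim: K => [|K IH] /=; first by left.
case: ifP => H; first by left.
right; case: IH => [->|//]; by rewrite ltnNge H.
Qed.

Lemma exists_pos d : is_dist d -> exists w G, List.In (w, G) d /\ Rlt 0 w.
Proof.
move=> [Hpos Hw]; apply: Classical_Prop.NNPP => Hn.
have : Rle (weight_sum d) 0.
  elim: d Hpos Hw Hn => [|[w G] d IH] Hpos Hw Hn /=; first by apply: Rle_refl.
  have Hw0 : Rle w 0.
    apply: Rnot_lt_le => Hlt; apply: Hn; exists w, G; split => //; by left.
  have : Rle (weight_sum d) 0.
    elim: d {IH Hpos Hw Hn} (fun p Hp => Hpos p (or_intror Hp))
      (fun H : exists w G, List.In (w, G) d /\ Rlt 0 w =>
        Hn (let: ex_intro w' (ex_intro G' (conj Hi Hl)) := H in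
            ex_intro _ w' (ex_intro _ G' (conj (or_intror Hi) Hl))))
      => [|[w' G'] d IH'] Hp' Hn' /=; first by apply: Rle_refl.
    have : Rle w' 0.
      apply: Rnot_lt_le => Hlt; apply: Hn'; exists w', G'; split => //; by left.
    have := IH' (fun p Hp => Hp' p (or_intror Hp))
      (fun H => Hn' (let: ex_intro w'' (ex_intro G'' (conj Hi Hl)) := H in
            ex_intro _ w'' (ex_intro _ G'' (conj (or_intror Hi) Hl)))).
    lra.
  simpl in *; lra.
rewrite Hw; lra.
Qed.

Lemma INR_expn2 n : INR (2 ^ n) = Rpow_def.pow 2 n.
Proof.
elim: n => [|n IH]; first by rewrite expn0.
by rewrite expnS mult_INR IH /=; ring.
Qed.

Lemma from_constr (T : eqType) (Q : seq T -> Prop) :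
  (forall k D, D.*2 < k ->
     exists (Inst : {ffun 'I_(2 ^ D) -> bool} -> seq T)
            (Hs : 'I_k -> seq T -> seq T) (Sc : 'I_(2 ^ D) -> {set 'I_k}),
     (forall i, is_hyp (Hs i)) /\ (forall j, Sc j != set0) /\
     (forall x j, holds (Q (scen_inst Hs (Inst x) (Sc j))) = x j) /\
     (forall x, inst_size (Inst x) <= (if D == 0 then 1 else 2 ^ D.+2))) ->
  requires_large_sketches Q.
Proof.
move=> Hc; exists (Rdiv 1 128); split; first lra.
move=> k n k0 P HP.
case: n => [|n].
  have [Hd _] := HP [::] (fun _ J => J) (fun _ J f Hf => Hf).
  have [w [G [HI Hw]]] := exists_pos Hd.
  exists [::], (fun _ J => J); split; first by move=> i J f.
  split; first done.
  exists w, G; split; first done; split; first done.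
  rewrite Rmin_right; last first.
    rewrite /Rpower; apply: Rlt_le; apply: exp_pos.
  have := pos_INR (size G); simpl INR; lra.
pose K := (k - 1)./2.
pose D := dsel n.+1 K.
have HDK : D <= K := dsel_le n.+1 K.
have HDk : D.*2 < k.
  have := leq_divM (k - 1) 2; rewrite divn2 -/K; move: HDK; rewrite -/D; lia.
have [Inst [Hs [Sc [H1 [H2 [H3 H4]]]]]] := Hc k D HDk.
have [x [w [G [HI [Hw H16]]]]] :=
  lower_bound HP (Inst := Inst) (expn_gt0 2 D) H1 H2 H3.
exists (Inst x), Hs; split; first done.
split.
  apply: leq_trans (H4 x) _.
  case: (dsel_size n.+1 K) => HD; rewrite -/D in HD.
    by rewrite HD.
  by case: (D == 0).
exists w, G; split; first done; split; first done.
have Hsz := pos_INR (size G).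
case: (dsel_max n.+1 K) => HD; rewrite -/D in HD.
-
  have Hk : k <= 128 * D.+1.
    have := leq_divM (k - 1) 2; rewrite divn2 -/K -HD; lia.
  have Hp : 2 ^ D.+1 <= 128 * size G by rewrite expnS; lia.
  apply: Rle_trans (_ : Rle (Rmult (Rdiv 1 128) (INR (2 ^ D.+1))) _); last first.
    have := le_INR _ _ (elimT leP Hp); rewrite mult_INR; simpl INR; lra.
  apply: Rmult_le_compat_l; first lra.
  apply: Rle_trans (Rmin_l _ _) _.
  rewrite INR_expn2 -Rpower_pow; last by simpl; lra.
  have -> : INR 2 = IZR 2 by simpl; lra.
  apply: Rle_Rpower; first lra.
  have := le_INR _ _ (elimT leP Hk); rewrite mult_INR; simpl INR; lra.
- have Hn : n.+1 <= 128 * size G by move: HD; rewrite !expnS; lia.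
  apply: Rle_trans (_ : Rle (Rmult (Rdiv 1 128) (INR n.+1)) _); last first.
    have := le_INR _ _ (elimT leP Hn); rewrite mult_INR; simpl INR; lra.
  apply: Rmult_le_compat_l; first lra.
  exact: Rmin_r.
Qed.

Theorem mainTheorem14 :
  requires_large_sketches Q_notsub /\
  (forall s t : nat, s <> t -> requires_large_sketches (Q_stconn s t)).
Proof.
split.
- apply: from_constr => k D HD.
  exists (nsInst D), (@nsHs D k), (Scn D k).
  split; first exact: ns_hyp.
  split; first exact: Scn_nonempty HD.
  split; first exact: ns_spec HD.
  exact: ns_size.
- move=> s t st; apply: from_constr => k D HD.
  exists (@stInst s t D), (@stHs s t D k), (Scn D k).
  split; first exact: st_hyp.
  split; first exact: Scn_nonempty HD.
  split; first exact: (st_spec st HD).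
  exact: st_size.
Qed.
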